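(* For all $N,k^*\in\omega$ and every real $\epsilon>0$ there is $M\in\omega$ with the following property. For every FAM $\Xi$ and all sets $A_n\subseteq\omega$ ($n<N$) there is a nonempty finite $u\subseteq\omega$ with $|u|\le M$ and $\min(u)>k^*$ such that \[ \Xi(A_n)-\epsilon<\frac{|A_n\cap u|}{|u|}<\Xi(A_n)+\epsilon\qquad\text{for all }n<N . \]
   Context: A partial FAM (finitely additive measure) is a finitely additive probability measure $\Xi'$ defined on a Boolean subalgebra $\mathcal B$ of $\mathcal P(\omega)$ such that $\{n\}\in\mathcal B$ and $\Xi'(\{n\})=0$ for every $n\in\omega$. A FAM is a partial FAM whose domain is all of $\mathcal P(\omega)$. *)

(* Defs.v *)
(* real numbers. Subsets of omega are represented as
   characteristic functions nat -> bool (classically all of P(omega)). *)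
From Stdlib Require Import Reals List.
Open Scope R_scope.

Definition subset_nat := nat -> bool.

Definition disjointb (A B : subset_nat) : Prop := forall n, A n = false \/ B n = false.
Definition unionb (A B : subset_nat) : subset_nat := fun n => orb (A n) (B n).
Definition fullb : subset_nat := fun _ => true.
Definition singletonb (k : nat) : subset_nat := fun n => Nat.eqb n k.

Definition is_FAM (Xi : subset_nat -> R) : Prop :=
  (forall A B, (forall n, A n = B n) -> Xi A = Xi B) /\
  (forall A, 0 <= Xi A) /\
  Xi fullb = 1 /\
  (forall A B, disjointb A B -> Xi (unionb A B) = Xi A + Xi B) /\
  (forall k, Xi (singletonb k) = 0).

(* |A ∩ u| for a finite set u given as a duplicate-free list *)
Definition count_in (A : subset_nat) (u : list nat) : nat :=
  length (filter A u).

(* Main.v *)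
Require Import Defs.
From Stdlib Require Import Reals List.
From Stdlib Require Import Lia Lra ZArith Arith Classical.
Open Scope R_scope.

Fixpoint rsum (f : nat -> R) (K : nat) : R :=
  match K with O => 0 | S k => rsum f k + f k end.
Fixpoint nsum (f : nat -> nat) (K : nat) : nat :=
  match K with O => O | S k => (nsum f k + f k)%nat end.

Lemma INR_nsum f K : INR (nsum f K) = rsum (fun j => INR (f j)) K.
Proof. induction K; cbn [nsum rsum]; [reflexivity|]. rewrite plus_INR, IHK; reflexivity. Qed.

Lemma rsum_ext f g K : (forall j, f j = g j) -> rsum f K = rsum g K.
Proof. intros H; induction K; cbn [rsum]; [reflexivity| rewrite IHK, H; reflexivity]. Qed.

Lemma rsum_le f g K : (forall j, f j <= g j) -> rsum f K <= rsum g K.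
Proof. intros H; induction K; cbn [rsum]; [lra| specialize (H K); lra]. Qed.

Lemma rsum_scal a f K : rsum (fun j => a * f j) K = a * rsum f K.
Proof. induction K; cbn [rsum]; [ring| rewrite IHK; ring]. Qed.

Lemma rsum_zero K : rsum (fun _ => 0) K = 0.
Proof. induction K; cbn [rsum]; lra. Qed.

Lemma rsum_approx a b K : (forall j, a j - 1 < b j <= a j) ->
  rsum a K - INR K <= rsum b K <= rsum a K.
Proof. intros H; induction K; cbn [rsum]; [simpl; lra|]. rewrite S_INR. specialize (H K). lra. Qed.

Definition fl (r : R) : nat := Z.to_nat (up r - 1).
Lemma fl_spec r : 0 <= r -> r - 1 < INR (fl r) <= r.
Proof.
  intros Hr. destruct (archimed r) as [H1 H2].
  assert (Hz : (0 <= up r - 1)%Z). { assert (0 < up r)%Z by (apply lt_0_IZR; lra). lia. }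
  unfold fl. rewrite INR_IZR_INZ, Z2Nat.id by exact Hz. rewrite minus_IZR. simpl (IZR 1). lra.
Qed.

Lemma Xi_mono Xi A B : is_FAM Xi -> (forall x, A x = true -> B x = true) -> Xi A <= Xi B.
Proof.
  intros F HAB. destruct F as (Hext & Hpos & H1 & Hadd & Hsing).
  assert (E : Xi B = Xi (unionb A (fun x => andb (B x) (negb (A x))))).
  { apply Hext. intro n. unfold unionb. specialize (HAB n).
    destruct (A n), (B n); simpl; auto. }
  rewrite E, Hadd.
  - specialize (Hpos (fun x => andb (B x) (negb (A x)))). lra.
  - intro n. destruct (A n); simpl; auto. right. now rewrite Bool.andb_false_r.
Qed.

Lemma Xi_empty Xi S : is_FAM Xi -> (forall x, S x = false) -> Xi S = 0.
Proof.
  intros F HS. pose proof F as (Hext & Hpos & H1 & Hadd & Hsing).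
  assert (E: Xi S = Xi (unionb S S)) by (apply Hext; intro n; unfold unionb; now rewrite HS).
  rewrite Hadd in E. lra. intro n; left; apply HS.
Qed.

Lemma Xi_bounded Xi : is_FAM Xi -> forall b S, (forall x, S x = true -> (x < b)%nat) -> Xi S = 0.
Proof.
  intros F. pose proof F as (Hext & Hpos & H1 & Hadd & Hsing).
  induction b; intros S HS.
  - apply Xi_empty; auto. intro x. destruct (S x) eqn:E; auto. apply HS in E; lia.
  - set (S1 := fun x => andb (S x) (negb (Nat.eqb x b))).
    set (S2 := fun x => andb (S x) (Nat.eqb x b)).
    assert (E : Xi S = Xi (unionb S1 S2)).
    { apply Hext; intro n; unfold unionb, S1, S2. destruct (S n), (Nat.eqb n b); reflexivity. }
    rewrite E, Hadd.
    + rewrite IHb.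
      * assert (Xi S2 <= Xi (singletonb b)).
        { apply Xi_mono; auto. intros x; unfold S2, singletonb. intro H. apply andb_prop in H; tauto. }
        rewrite Hsing in H. specialize (Hpos S2). lra.
      * intros x; unfold S1; intro H. apply andb_prop in H as [H H'].
        apply HS in H. apply Bool.negb_true_iff, Nat.eqb_neq in H'. lia.
    + intro n; unfold S1, S2. destruct (S n), (Nat.eqb n b); simpl; auto.
Qed.

Definition cell (c : nat -> nat) (j : nat) : subset_nat := fun x => Nat.eqb (c x) j.

Lemma Xi_cells Xi c K h : is_FAM Xi -> (forall x, (c x < K)%nat) ->
  Xi (fun x => h (c x)) = rsum (fun j => if h j then Xi (cell c j) else 0) K.
Proof.
  intros F Hc. pose proof F as (Hext & Hpos & H1 & Hadd & Hsing).
  assert (G : forall K', Xi (fun x => andb (h (c x)) (Nat.ltb (c x) K'))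
     = rsum (fun j => if h j then Xi (cell c j) else 0) K').
  { induction K'; cbn [rsum].
    - apply Xi_empty; auto. intro x. destruct (h (c x)); reflexivity.
    - rewrite <- IHK'.
      assert (E : Xi (fun x => andb (h (c x)) (Nat.ltb (c x) (S K'))) =
          Xi (unionb (fun x => andb (h (c x)) (Nat.ltb (c x) K'))
                     (fun x => andb (h (c x)) (Nat.eqb (c x) K')))).
      { apply Hext; intro x; unfold unionb.
        destruct (Nat.ltb_spec (c x) (S K')), (Nat.ltb_spec (c x) K'), (Nat.eqb_spec (c x) K');
        destruct (h (c x)); simpl; auto; lia. }
      rewrite E, Hadd.
      + f_equal. destruct (h K') eqn:HK.
        * apply Hext. intro x; unfold cell. destruct (Nat.eqb_spec (c x) K'); subst.
          -- rewrite HK; reflexivity.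
          -- destruct (h (c x)); reflexivity.
        * apply Xi_empty; auto. intro x. destruct (Nat.eqb_spec (c x) K'); subst.
          -- rewrite HK; reflexivity.
          -- destruct (h (c x)); reflexivity.
      + intro x. destruct (Nat.ltb_spec (c x) K'), (Nat.eqb_spec (c x) K');
        destruct (h (c x)); simpl; auto; lia. }
  rewrite <- (G K). apply Hext. intro x. destruct (Nat.ltb_spec (c x) K).
  - destruct (h (c x)); reflexivity.
  - specialize (Hc x); lia.
Qed.

Lemma pick_list (P : nat -> bool) (kstar : nat) :
  (forall b, exists x, (b < x)%nat /\ P x = true) ->
  forall m, exists l, NoDup l /\ length l = m /\
    forall x, In x l -> (kstar < x)%nat /\ P x = true.
Proof.
  intros HP m.
  assert (H : exists l B, NoDup l /\ length l = m /\
    forall x, In x l -> (kstar < x)%nat /\ (x <= B)%nat /\ P x = true).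
  { induction m.
    - exists nil, O. split; [constructor|]. split; [reflexivity|]. intros x [].
    - destruct IHm as (l & B & Hnd & Hl & Hx).
      destruct (HP (B + kstar)%nat) as (y & Hy & Py).
      exists (y :: l), y. split; [|split].
      + constructor; auto. intro Hin. apply Hx in Hin. lia.
      + simpl; lia.
      + intros x [<-|Hin]; [split; [lia| split; [lia| exact Py]]|].
        apply Hx in Hin. split; [lia| split; [lia| tauto]]. }
  destruct H as (l & B & H1 & H2 & H3). exists l. split; [|split]; auto.
  intros x Hx; apply H3 in Hx; tauto.
Qed.

Lemma filter_const (f : nat -> bool) b l : (forall x, In x l -> f x = b) ->
  filter f l = if b then l else nil.
Proof.
  induction l as [|a l IH]; intros H; [destruct b; reflexivity|].
  simpl. rewrite (H a) by (left; reflexivity). rewrite IH by (intros; apply H; right; auto).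
  destruct b; reflexivity.
Qed.

Lemma build_u (c : nat -> nat) (m : nat -> nat) (kstar : nat) :
  (forall j, m j <> O -> forall b, exists x, (b < x)%nat /\ c x = j) ->
  forall K, exists u, NoDup u /\ (forall x, In x u -> (kstar < x)%nat /\ (c x < K)%nat) /\
    forall h : nat -> bool, count_in (fun x => h (c x)) u = nsum (fun j => if h j then m j else O) K.
Proof.
  intros Hunb K. induction K.
  - exists nil. split; [constructor|]. split; [intros x []|]. intros h; reflexivity.
  - destruct IHK as (u & Hnd & Hin & Hcnt).
    assert (Hl : exists l, NoDup l /\ length l = m K /\
      forall x, In x l -> (kstar < x)%nat /\ cell c K x = true).
    { destruct (Nat.eq_dec (m K) O) as [E|E].
      - exists nil. rewrite E. split; [constructor|]. split; [reflexivity|]. intros x [].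
      - apply pick_list. intros b. destruct (Hunb K E b) as (x & Hx & Hcx).
        exists x. split; auto. unfold cell. now apply Nat.eqb_eq. }
    destruct Hl as (l & Hndl & Hlen & Hinl).
    exists (u ++ l). split; [|split].
    + apply NoDup_app; auto. intros a Ha Hb. apply Hin in Ha. apply Hinl in Hb.
      unfold cell in Hb. destruct Hb as [_ Hb]. apply Nat.eqb_eq in Hb. lia.
    + intros x Hx. apply in_app_or in Hx as [Hx|Hx].
      * apply Hin in Hx; split; lia.
      * apply Hinl in Hx. unfold cell in Hx. destruct Hx as [Hx1 Hx2].
        apply Nat.eqb_eq in Hx2. split; lia.
    + intros h. unfold count_in in *. rewrite filter_app, length_app, Hcnt.
      cbn [nsum]. f_equal.
      rewrite (filter_const _ (h K)).
      * destruct (h K); simpl; auto.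
      * intros x Hx. apply Hinl in Hx. unfold cell in Hx. destruct Hx as [_ Hx2].
        apply Nat.eqb_eq in Hx2. now rewrite Hx2.
Qed.

Lemma encode N (A : nat -> subset_nat) : exists (c : nat -> nat) (g : nat -> nat -> bool),
  (forall x, (c x < 2 ^ N)%nat) /\ forall n x, (n < N)%nat -> A n x = g n (c x).
Proof.
  induction N.
  - exists (fun _ => O), (fun _ _ => true). split; [intros; simpl; lia| intros; lia].
  - destruct IHN as (c & g & Hc & Hg).
    exists (fun x => (2 * c x + (if A N x then 1 else 0))%nat).
    exists (fun n j => if Nat.eqb n N then Nat.odd j else g n (Nat.div2 j)).
    split.
    + intros x. specialize (Hc x). rewrite Nat.pow_succ_r'. destruct (A N x); lia.
    + intros n x Hn. destruct (Nat.eqb_spec n N).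
      * subst. destruct (A N x).
        -- now rewrite Nat.odd_odd.
        -- now rewrite Nat.add_0_r, Nat.odd_even.
      * rewrite Hg by lia. f_equal. destruct (A N x).
        -- now rewrite Nat.div2_odd'.
        -- now rewrite Nat.add_0_r, Nat.div2_double.
Qed.

Lemma final_ineq (L K T S P eps : R) : 0 < eps -> 1 <= K -> 0 <= P <= 1 ->
  P * L - K <= T <= P * L -> L - K <= S <= L -> L - K > K / eps ->
  P - eps < T / S /\ T / S < P + eps.
Proof.
  intros He HK HP HT HS HL.
  assert (Hk : K / eps > 0) by (apply Rdiv_lt_0_compat; lra).
  assert (HSp : S > 0) by lra.
  assert (E1 : eps * (L - K) > K).
  { apply (Rmult_lt_compat_l eps) in HL; auto. unfold Rdiv in HL.
    rewrite <- Rmult_assoc, (Rmult_comm eps K), Rmult_assoc, Rinv_r in HL by lra. lra. }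
  assert (E2 : eps * S >= eps * (L - K)) by (apply Rle_ge, Rmult_le_compat_l; lra).
  assert (E3 : P * S >= P * (L - K)) by (apply Rle_ge, Rmult_le_compat_l; lra).
  assert (E4 : P * S <= P * L) by (apply Rmult_le_compat_l; lra).
  assert (E5 : P * K <= K) by (rewrite <- (Rmult_1_l K) at 2; apply Rmult_le_compat_r; lra).
  assert (Q : T / S * S = T) by (field; lra).
  split.
  - apply (Rmult_lt_reg_r S); auto. rewrite Q. lra.
  - apply (Rmult_lt_reg_r S); auto. rewrite Q. lra.
Qed.

Theorem lemma1 :
  forall (N kstar : nat) (eps : R), 0 < eps ->
  exists M : nat,
    forall (Xi : subset_nat -> R) (A : nat -> subset_nat),
      is_FAM Xi ->
      exists u : list nat,
        NoDup u /\ u <> nil /\ (length u <= M)%nat /\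
        (forall x, In x u -> (kstar < x)%nat) /\
        (forall n, (n < N)%nat ->
           Xi (A n) - eps < INR (count_in (A n) u) / INR (length u) /\
           INR (count_in (A n) u) / INR (length u) < Xi (A n) + eps).
Proof.
  intros N kstar eps Heps.
  set (K := (2 ^ N)%nat).
  assert (HK : 1 <= INR K).
  { replace 1 with (INR 1) by reflexivity. apply le_INR. unfold K.
    pose proof (Nat.pow_nonzero 2 N). lia. }
  set (Kr := INR K) in *.
  assert (Hk : Kr / eps > 0) by (apply Rdiv_lt_0_compat; lra).
  destruct (archimed (Kr + Kr / eps)) as [Hup _].
  set (L := Z.to_nat (up (Kr + Kr / eps))).
  assert (HL : INR L > Kr + Kr / eps).
  { unfold L. rewrite INR_IZR_INZ, Z2Nat.id. lra.
    assert (0 < up (Kr + Kr / eps))%Z by (apply lt_0_IZR; lra). lia. }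
  exists L.
  intros Xi A F.
  pose proof F as (Hext & Hpos & H1 & Hadd & Hsing).
  destruct (encode N A) as (c & g & Hc & Hg).
  set (p := fun j => Xi (cell c j)).
  set (m := fun j => fl (INR L * p j)).
  assert (Hm : forall j, INR L * p j - 1 < INR (m j) <= INR L * p j).
  { intros j. apply fl_spec. apply Rmult_le_pos; [apply pos_INR| apply Hpos]. }
  assert (Hunb : forall j, m j <> O -> forall b, exists x, (b < x)%nat /\ c x = j).
  { intros j Hj b. apply NNPP. intros Hn. apply Hj.
    assert (Hp : p j = 0).
    { apply (Xi_bounded Xi F (S b)). intros x Hx. unfold cell in Hx.
      apply Nat.eqb_eq in Hx. destruct (Nat.lt_ge_cases b x); [|lia].
      exfalso; apply Hn; exists x; auto. }
    specialize (Hm j). rewrite Hp, Rmult_0_r in Hm.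
    destruct (m j); auto. rewrite S_INR in Hm. pose proof (pos_INR n). lra. }
  destruct (build_u c m kstar Hunb K) as (u & Hnd & Hin & Hcount).
  assert (Hlen : length u = nsum m K).
  { specialize (Hcount (fun _ => true)). unfold count_in in Hcount.
    rewrite (filter_const _ true) in Hcount by auto. exact Hcount. }
  assert (Hsum1 : rsum p K = 1).
  { rewrite <- H1. symmetry. apply (Xi_cells Xi c K (fun _ => true) F Hc). }
  assert (HS : INR L - Kr <= INR (length u) <= INR L).
  { rewrite Hlen, INR_nsum.
    pose proof (rsum_approx (fun j => INR L * p j) (fun j => INR (m j)) K Hm) as Hb.
    rewrite rsum_scal, Hsum1 in Hb. fold Kr in Hb. lra. }
  exists u. split; [exact Hnd|]. split; [|split; [|split]].
  - intros E. rewrite E in HS. simpl in HS. lra.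
  - apply INR_le. lra.
  - intros x Hx; apply Hin in Hx; tauto.
  - intros n Hn.
    set (P := rsum (fun j => if g n j then p j else 0) K).
    assert (HXi : Xi (A n) = P).
    { unfold P, p. rewrite <- (Xi_cells Xi c K (g n) F Hc). apply Hext. intro x. apply Hg; auto. }
    assert (HT : INR (count_in (A n) u) = rsum (fun j => INR (if g n j then m j else O)) K).
    { rewrite <- INR_nsum, <- Hcount. unfold count_in. f_equal. f_equal.
      apply filter_ext. intro x; apply Hg; auto. }
    assert (HP : 0 <= P <= 1).
    { split.
      - rewrite <- (rsum_zero K). apply rsum_le. intros j. destruct (g n j); [apply Hpos| lra].
      - rewrite <- Hsum1. apply rsum_le. intros j. destruct (g n j); [lra| apply Hpos]. }
    assert (HTb : P * INR L - Kr <= INR (count_in (A n) u) <= P * INR L).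
    { rewrite HT.
      pose proof (rsum_approx (fun j => INR L * (if g n j then p j else 0))
                   (fun j => INR (if g n j then m j else O)) K) as Hb.
      rewrite rsum_scal in Hb. fold P Kr in Hb.
      assert (INR L * P - Kr <= rsum (fun j => INR (if g n j then m j else 0%nat)) K
              <= INR L * P) by (apply Hb; intros j; destruct (g n j); [apply Hm| simpl; lra]).
      lra. }
    rewrite HXi. apply (final_ineq (INR L) Kr); auto. lra.
Qed.
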